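(* If $n$ is a non-negative integer and $s$ is a complex number that is not a negative integer, then $$\sum_{k = 1}^n \sum_{j = 0}^{k - 1} \frac{(- 1)^j s}{k - j} \binom{s}{n - j} = s\binom{s - 1}{n} H_n + \binom{s - 1}{n} - (- 1)^n.$$
   Context: For complex $s$ and non-negative integer $m$, $\binom{s}{m}=\frac{s(s-1)\cdots(s-m+1)}{m!}$. $H_n=\sum_{i=1}^n\frac1i$. Empty sums are zero. *)

(* Defs.v *)
From HB Require Import structures.
From mathcomp Require Import all_boot all_order all_algebra.
From mathcomp Require Import complex.
From mathcomp Require Import reals.
Set Implicit Arguments. Unset Strict Implicit. Unset Printing Implicit Defensive.
Import Order.TTheory GRing.Theory Num.Theory.
Local Open Scope ring_scope.

Definition binomC (F : fieldType) (s : F) (m : nat) : F :=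
  (\prod_(i < m) (s - i%:R)) / (m`!)%:R.

Definition harmonic (F : fieldType) (n : nat) : F :=
  \sum_(1 <= i < n.+1) (i%:R)^-1.

(* Main.v *)
Require Import Defs.
From HB Require Import structures.
From mathcomp Require Import all_boot all_order all_algebra.
From mathcomp Require Import complex.
From mathcomp Require Import reals.
From mathcomp Require Import ring.
Import Order.TTheory GRing.Theory Num.Theory.
Local Open Scope ring_scope.

Lemma tri_swap (F : zmodType) (n : nat) (g : nat -> nat -> F) :
  \sum_(0 <= k < n) \sum_(0 <= j < k.+1) g j (k.+1 - j)%N
  = \sum_(0 <= j < n) \sum_(0 <= m < n - j) g j m.+1.
Proof.
elim: n g => [|n IH] g; first by rewrite !big_geq.
under eq_bigr => k _ do rewrite big_nat_recl //=.
rewrite big_split /= [in X in _ + X]big_nat_recl //= [in X in _ + (X + _)]big_geq // add0r.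
under [in X in _ + X]eq_bigr => k _ do under eq_bigr => j _ do rewrite subSS.
rewrite (IH (fun j => g j.+1)) [RHS]big_nat_recl //= subn0.
Qed.

Lemma binomS (F : numFieldType) (x : F) n :
  binomC x n.+1 = x * binomC (x - 1) n / n.+1%:R.
Proof.
rewrite /binomC big_ord_recl /= subr0 factS natrM.
have -> : \prod_(i < n) (x - (bump 0 i)%:R) = \prod_(i < n) (x - 1 - i%:R).
  apply: eq_bigr => i _; rewrite /bump /= add1n -addn1 natrD; ring.
field; rewrite ?andbT ?nat1r ?pnatr_eq0 -?lt0n ?fact_gt0 //.
Qed.

Lemma binomS' (F : numFieldType) (x : F) n :
  binomC x n.+1 = binomC x n * (x - n%:R) / n.+1%:R.
Proof.
rewrite /binomC big_ord_recr /= factS natrM; field; rewrite ?andbT ?nat1r ?pnatr_eq0 -?lt0n ?fact_gt0 //.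
Qed.

Definition BB {F : fieldType} (s : F) n :=
  \sum_(0 <= j < n) (-1) ^+ j * binomC s (n - j) * harmonic F (n - j).

Lemma BB_rec (F : fieldType) (s : F) n :
  BB s n.+1 = binomC s n.+1 * harmonic F n.+1 - BB s n.
Proof.
rewrite /BB big_nat_recl //= expr0 mul1r subn0; congr (_ + _).
rewrite -sumrN; apply: eq_bigr => j _.
by rewrite subSS exprS !mulN1r !mulNr.
Qed.

Lemma harmS (F : fieldType) n : harmonic F n.+1 = harmonic F n + n.+1%:R^-1.
Proof. by rewrite /harmonic big_nat_recr. Qed.

Lemma main_id (F : numFieldType) (s : F) n :
  s * BB s n = s * binomC (s - 1) n * harmonic F n + binomC (s - 1) n - (-1) ^+ n.
Proof.
elim: n => [|n IH].
  rewrite /BB big_geq // /binomC big_ord0 /harmonic big_geq // expr0.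
  by rewrite mulr0 mul1r fact0 invr1 mulr0 addrK.
rewrite BB_rec mulrBr IH (binomS _ s) (binomS' _ (s - 1)) harmS.
have hN : n.+1%:R != 0 :> F by rewrite pnatr_eq0.
set c := binomC (s - 1) n; set H := harmonic F n.
rewrite exprS.
have -> : (s - 1 - n%:R) = s - n.+1%:R by rewrite -addn1 natrD opprD addrA addrAC.
field; rewrite ?andbT ?nat1r ?pnatr_eq0 //.
Qed.

Theorem proposition21 (R : realType) (n : nat) (s : R[i])
  (hs : forall m : nat, s <> - (m.+1)%:R) :
  \sum_(1 <= k < n.+1) \sum_(0 <= j < k)
      ((-1) ^+ j * s / (k - j)%:R) * binomC s (n - j)
  = s * binomC (s - 1) n * harmonic _ n + binomC (s - 1) n - (-1) ^+ n.
Proof.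
rewrite -main_id big_add1 /=.
rewrite (tri_swap _ n (fun j m => ((-1) ^+ j * s / m%:R) * binomC s (n - j))).
rewrite /BB mulr_sumr; apply: eq_bigr => j _.
rewrite /harmonic big_add1 /= mulr_sumr mulr_sumr; apply: eq_bigr => m _.
rewrite /binomC; ring.
Qed.
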